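(* Let $G$ be an undirected weighted graph with vertex set $V(G)$, weight function $w$ and vertex weight $\nu$ as described in the context. Let $\mathcal{S}=(S_m)_{m=0,\ldots,n}$ be a partition of $V(G)$ into disjoint sets, and assume $K_m=K_m(\mathcal{S})>0$ for all $m=0,\ldots,n-1$. For $f:V(G)\to\mathbb{C}$ write $f_0=f|_{S_0}$. Then for all $1<p<\infty$, $1<q<\infty$ with $1/p+1/q=1$, and all $f\in \ell^p_\nu(G)$, \[ \| f \|_{p,\nu} \le \left( \sum_{m=0}^{n} \prod_{j=0}^{m-1} \frac{D_j}{K_j} \right)^{1/p} \| f_0 \|_{p,\nu} + \left( \sum_{m=1}^n \left( \sum_{k=1}^m \frac{1}{K_{k-1}^{q/p}} \left( \prod_{i=k}^{m-1} \frac{D_i}{K_i} \right)^{q/p} \right)^{p/q} \right)^{1/p} \| \nabla_w f \|_{p}. \] Moreover, for all $f\in \ell^1_\nu(G)$, \[ \| f \|_{1,\nu} \le \left( \sum_{m=0}^{n} \prod_{j=0}^{m-1} \frac{D_j}{K_j} \right) \| f_0 \|_{1,\nu} + \max_{k=1,\ldots,n} \left( \frac{1}{K_{k-1}} \sum_{m=k}^n \prod_{i=k}^{m-1} \frac{D_i}{K_i} \right) \| \nabla_w f \|_{1}. \]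
   Context: $G$ is an undirected weighted graph: $V(G)$ is a (countable) vertex set and $w:V(G)\times V(G)\to[0,\infty)$ is symmetric ($w(u,v)=w(v,u)$) with $w(u,u)=0$; the edges are the pairs $(u,v)$ with $w(u,v)\neq 0$. A strictly positive weight $\nu:V(G)\to(0,\infty)$ is fixed. For $1\le p<\infty$, $\ell^p_\nu(G)$ is the space of $f:V(G)\to\mathbb{C}$ with $\|f\|_{p,\nu}=\left(\sum_{v\in V(G)}|f(v)|^p\nu(v)\right)^{1/p}<\infty$; for a subset $A$, $\|f|_A\|_{p,\nu}=\left(\sum_{v\in A}|f(v)|^p\nu(v)\right)^{1/p}$. The weighted gradient $p$-norm is $\|\nabla_w f\|_p=\left(\sum_{u,v\in V(G)}|f(u)-f(v)|^p w(u,v)\right)^{1/p}$ (sum over ordered pairs). For $A\subset V(G)$ and $v\in V(G)$, $w_A(v)=\sum_{u\in A}w(u,v)$. For a partition $\mathcal{S}=(S_m)_{m=0,\ldots,n}$ of $V(G)$: $D_m=D_m(\mathcal{S})=\sup_{v\in S_m} \frac{w_{S_{m+1}}(v)}{\nu(v)}$ and $K_m=K_m(\mathcal{S})=\inf_{v\in S_{m+1}}\frac{w_{S_m}(v)}{\nu(v)}$. Convention: a product over an empty index range equals $1$ and a sum over an empty index range equals $0$. *)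

(* Defs.v *)
From HB Require Import structures.
From mathcomp Require Import all_boot all_order all_algebra.
From mathcomp Require Import all_classical all_reals all_analysis.
From mathcomp Require Import complex.
Set Implicit Arguments. Unset Strict Implicit. Unset Printing Implicit Defensive.
Import Order.TTheory GRing.Theory Num.Theory.
Local Open Scope classical_set_scope.
Local Open Scope ring_scope.

Section GraphDefs.
Variables (R : realType) (V : choiceType).

Definition cmod (z : R[i]) : R := Normc.normc z.

Definition wA (w : V -> V -> R) (A : set V) (v : V) : \bar R :=
  (\esum_(u in A) (w u v)%:E)%R.

Definition Dm (w : V -> V -> R) (nu : V -> R) (S : nat -> set V) (m : nat)
  : \bar R :=
  ereal_sup [set (wA w (S m.+1) v * (nu v)^-1%:E)%E | v in S m].

Definition Km (w : V -> V -> R) (nu : V -> R) (S : nat -> set V) (m : nat)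
  : \bar R :=
  ereal_inf [set (wA w (S m) v * (nu v)^-1%:E)%E | v in S m.+1].

Definition psum (p : R) (nu : V -> R) (A : set V) (f : V -> R[i]) : \bar R :=
  (\esum_(v in A) ((cmod (f v)) `^ p * nu v)%:E)%R.

Definition pnorm (p : R) (nu : V -> R) (A : set V) (f : V -> R[i]) : \bar R :=
  poweR (psum p nu A f) p^-1.

(* ||grad_w f||_p = (sum_{(u,v)} |f u - f v|^p w(u,v))^(1/p), ordered pairs *)
Definition gradnorm (p : R) (w : V -> V -> R) (f : V -> R[i]) : \bar R :=
  poweR (\esum_(uv in [set: V * V])
           ((cmod (f uv.1 - f uv.2)) `^ p * w uv.1 uv.2)%:E)%R p^-1.

End GraphDefs.

(* Main.v *)
Require Import Defs.
From HB Require Import structures.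
From mathcomp Require Import all_boot all_order all_algebra.
From mathcomp Require Import all_classical all_reals all_analysis.
From mathcomp Require Import complex.
From mathcomp Require Import ring lra.
Import Order.TTheory GRing.Theory Num.Theory.
Local Open Scope classical_set_scope.
Local Open Scope ring_scope.
Section RealLemmas.
Variable R : realType.
Implicit Types (a b l p x y : R).

Definition cc p l : R := l * (l^-1) `^ p.

Lemma cc_ge0 p l : 0 <= l -> 0 <= cc p l.
Proof. by move=> l0; rewrite /cc mulr_ge0 ?powR_ge0. Qed.

Lemma conv_pt p l a b : 1 <= p -> 0 < l < 1 -> 0 <= a -> 0 <= b ->
  (a + b) `^ p <= cc p l * a `^ p + cc p (1 - l) * b `^ p.
Proof.
move=> p1 /andP[l0 l1] a0 b0.
have l1' : 0 < 1 - l by rewrite subr_gt0.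
pose t : {i01 R} := Itv01 (ltW l0) (ltW l1).
have := @convex_powR R p p1 t (a / l) (b / (1 - l)).
rewrite !inE /= !in_itv /= !andbT !divr_ge0 ?(ltW l0) ?(ltW l1') //.
move=> /(_ isT isT).
rewrite [conv _ _ _]convRE /= /unstable.onem.
rewrite !mulrA !(mulrC l) !(mulrC (1 - l)) -!mulrA !divff ?gt_eqF // !mulr1.
rewrite /cc !powRM ?invr_ge0 ?(ltW l0) ?(ltW l1') //.
rewrite convRE /= /unstable.onem (mulrC (a `^ p)) (mulrC (b `^ p)).
by rewrite !mulrA.
Qed.


Lemma powRK p x : 0 < p -> 0 <= x -> (x `^ p) `^ p^-1 = x.
Proof. by move=> p0 x0; rewrite -powRrM mulfV ?gt_eqF // powRr1. Qed.

Lemma powRKV p x : 0 < p -> 0 <= x -> (x `^ p^-1) `^ p = x.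
Proof. by move=> p0 x0; rewrite -powRrM mulVf ?gt_eqF // powRr1. Qed.

Lemma lim1 p (Z Y : R) : 1 <= p -> 0 <= Z -> 0 <= Y ->
  (forall m, 0 < m < 1 -> Z <= cc p m * Y) -> Z <= Y.
Proof.
move=> p1 Z0 Y0 H; rewrite leNgt; apply/negP => YZ.
have h2 : 0 < (2^-1 : R) < 1 by rewrite invr_gt0 ltr0n /= invf_lt1 ?ltr1n.
have [Y00|Ypos] := eqVneq Y 0.
  by move: (H _ h2); rewrite Y00 mulr0 => /(lt_le_trans (lt_le_trans (le_lt_trans Y0 YZ) (le_refl _))); rewrite ltxx.
have {Ypos}Ypos : 0 < Y by rewrite lt_neqAle eq_sym Ypos Y0.
have [p1'|pn1] := eqVneq p 1.
  have := H _ h2; rewrite p1' /cc powRr1 ?invr_ge0 // mulfV ?mul1r ?invr_eq0 //.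
  by move=> /(lt_le_trans YZ); rewrite ltxx.
have {pn1}p1s : 1 < p by rewrite lt_neqAle eq_sym pn1 p1.
have e0 : 0 < (p - 1)^-1 by rewrite invr_gt0 subr_gt0.
have ZY1 : 1 < Z / Y by rewrite ltr_pdivlMr // mul1r.
set rho := (Z / Y) `^ (p - 1)^-1.
have rho1 : 1 < rho.
  have := @gt0_ltr_powR R _ e0 1 (Z / Y).
  by rewrite powR1; apply; rewrite ?nnegrE ?ler01 ?(le_trans ler01 (ltW ZY1)).
set m := (1 + rho) / 2.
have m1 : 1 < m by rewrite /m ltr_pdivlMr // mul1r -[2]/(1 + 1 : R) ltrD2l.
have mrho : m < rho by rewrite /m ltr_pdivrMr // mulrDr mulr1 ltrD2r.
have m0 : 0 < m by rewrite (lt_trans ltr01).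
have hm : 0 < m^-1 < 1 by rewrite invr_gt0 m0 /= invf_lt1.
move: (H _ hm); rewrite /cc invrK.
have -> : m^-1 * m `^ p = m `^ (p - 1).
  by rewrite powRB ?gt_eqF ?implybT // powRr1 ?ltW // mulrC.
move=> HZ.
have : m `^ (p - 1) < rho `^ (p - 1).
  by apply: gt0_ltr_powR; rewrite ?subr_gt0 ?nnegrE ?ltW // (lt_trans ltr01).
rewrite /rho -powRrM mulVf ?gt_eqF ?subr_gt0 // powRr1 ?divr_ge0 //.
rewrite -(ltr_pM2r Ypos) divfK ?gt_eqF // => /(le_lt_trans HZ).
by rewrite ltxx.
Qed.

Lemma ccE_dummy : True. Proof. by []. Qed.

Lemma mink p (Z X Y : R) : 1 <= p -> 0 <= Z -> 0 <= X -> 0 <= Y ->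
  (forall l, 0 < l < 1 -> Z <= cc p l * X + cc p (1 - l) * Y) ->
  Z `^ p^-1 <= X `^ p^-1 + Y `^ p^-1.
Proof.
move=> p1 Z0 X0 Y0 H.
have p0 : 0 < p by rewrite (lt_le_trans ltr01).
have pi0 : p^-1 != 0 by rewrite invr_eq0 gt_eqF.
have [X00|Xn0] := eqVneq X 0.
  rewrite X00 in H *; rewrite powR0 // add0r.
  apply: (@ge0_ler_powR R p^-1); rewrite ?invr_ge0 ?nnegrE ?(ltW p0) //.
  apply: (@lim1 p Z Y p1) => // m /andP[m0 m1].
  have := H (1 - m); rewrite (_ : 1 - (1 - m) = m); last by ring.
  rewrite mulr0 add0r; apply.
  by rewrite subr_gt0 m1 /= gtrBl.
have [Y00|Yn0] := eqVneq Y 0.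
  rewrite Y00 in H *; rewrite powR0 // addr0.
  apply: (@ge0_ler_powR R p^-1); rewrite ?invr_ge0 ?nnegrE ?(ltW p0) //.
  apply: (@lim1 p Z X p1) => // m hm.
  by have := H m hm; rewrite mulr0 addr0.
have Xp : 0 < X by rewrite lt_neqAle eq_sym Xn0.
have Yp : 0 < Y by rewrite lt_neqAle eq_sym Yn0.
set x := X `^ p^-1; set y := Y `^ p^-1.
have xp : 0 < x by rewrite powR_gt0.
have yp : 0 < y by rewrite powR_gt0.
have xyp : 0 < x + y by rewrite addr_gt0.
have hl : 0 < x / (x + y) < 1.
  by rewrite divr_gt0 //= ltr_pdivrMr // mul1r ltrDl.
have := H _ hl.
have -> : 1 - x / (x + y) = y / (x + y).
  by field; rewrite gt_eqF.
have HX : X = x `^ p by rewrite /x powRKV ?ltW.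
have HY : Y = y `^ p by rewrite /y powRKV ?ltW.
clearbody x y.
have ccE u : 0 < u -> cc p (u / (x + y)) * u `^ p = u / (x + y) * (x + y) `^ p.
  move=> u0; rewrite /cc invf_div -mulrA -powRM; last 2 first.
  - by rewrite divr_ge0 // ltW.
  - exact: ltW.
  by rewrite divfK // gt_eqF.
rewrite {1}HX {1}HY (ccE x xp) (ccE y yp) -mulrDl -mulrDl divff ?gt_eqF // mul1r.
move=> HZ; rewrite -(@powRK p (x + y) p0 (ltW xyp)).
by apply: (@ge0_ler_powR R p^-1); rewrite ?invr_ge0 ?nnegrE ?powR_ge0 ?(ltW p0).
Qed.

Lemma minkF (I : Type) (s : seq I) p (y z : I -> R) : 1 <= p ->
  (forall i, 0 <= y i) -> (forall i, 0 <= z i) ->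
  (\sum_(i <- s) (y i + z i) `^ p) `^ p^-1 <=
  (\sum_(i <- s) y i `^ p) `^ p^-1 + (\sum_(i <- s) z i `^ p) `^ p^-1.
Proof.
move=> p1 y0 z0; apply: mink => //; try by rewrite sumr_ge0 // => i _; rewrite powR_ge0.
move=> l hl; rewrite !mulr_sumr -big_split /=; apply: ler_sum => i _.
exact: conv_pt.
Qed.

Lemma hoelderF (I : Type) (s : seq I) p q (a b : I -> R) : 0 < p -> 0 < q ->
  p^-1 + q^-1 = 1 ->
  (forall i, 0 <= a i) -> (forall i, 0 <= b i) ->
  \sum_(i <- s) a i * b i <=
  (\sum_(i <- s) a i `^ p) `^ p^-1 * (\sum_(i <- s) b i `^ q) `^ q^-1.
Proof.
move=> p0 q0 pq a0 b0; elim: s => [|x s IH].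
  by rewrite !big_nil mulr_ge0 ?powR_ge0.
rewrite !big_cons.
have A0 : 0 <= \sum_(i <- s) a i `^ p by rewrite sumr_ge0 // => i _; rewrite powR_ge0.
have B0 : 0 <= \sum_(i <- s) b i `^ q by rewrite sumr_ge0 // => i _; rewrite powR_ge0.
apply: le_trans (lerD (le_refl _) IH) _.
move: (\sum_(i <- s) a i `^ p) (\sum_(i <- s) b i `^ q) A0 B0 => A B A0 B0.
have := @hoelder2 R (a x) _ (b x) _ p q (a0 x) (powR_ge0 A p^-1)
  (b0 x) (powR_ge0 B q^-1) p0 q0 pq.
by rewrite (@powRKV p _ p0 A0) (@powRKV q _ q0 B0).
Qed.
End RealLemmas.
Arguments cc {R}.
From mathcomp Require Import zify.

Section EsumLemmas.
Variable R : realType.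
Local Open Scope ereal_scope.

Lemma esumZ (T : choiceType) (I : set T) (r : R) (a : T -> \bar R) :
  (0 <= r)%R -> (forall i, 0 <= a i) ->
  \esum_(i in I) (r%:E * a i) = r%:E * \esum_(i in I) a i.
Proof.
move=> r0 a0; rewrite /esum -ereal_supZl //; last first.
  by apply/set0P; exists 0; exists set0; [exact: fsets_set0|rewrite fsbig_set0].
congr ereal_sup; apply/seteqP; split => x /=.
  move=> [A [fA AI] <-]; exists (\sum_(x \in A) a x); first by exists A.
  by rewrite !fsbig_finite // ge0_sume_distrr.
move=> [y [A [fA AI] <-] <-]; exists A => //.
by rewrite !fsbig_finite // ge0_sume_distrr.
Qed.

Lemma esum_swap (T1 T2 : choiceType) (I : set T1) (J : set T2)
  (a : T1 -> T2 -> \bar R) : (forall i j, 0 <= a i j) ->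
  \esum_(i in I) \esum_(j in J) a i j = \esum_(j in J) \esum_(i in I) a i j.
Proof.
move=> a0; rewrite !esum_esum; try by move=> *; apply: a0.
rewrite (@reindex_esum R _ _ (J `*`` fun=> I) (I `*`` fun=> J)
  (fun k => (k.2, k.1)) (fun k => a k.1 k.2)) //.
split.
- by move=> [x y] /= [Jx Iy].
- by move=> [x1 y1] [x2 y2] _ _ /= [-> ->].
- by move=> [x y] /= [Ix Jy]; exists (y, x).
Qed.

Lemma esum_mono_set (T : choiceType) (A B : set T) (a : T -> \bar R) :
  A `<=` B -> (forall i, 0 <= a i) ->
  \esum_(i in A) a i <= \esum_(i in B) a i.
Proof.
move=> AB a0; rewrite esum_mkcond [leRHS]esum_mkcond; apply: le_esum => i _.
case: ifPn => [/[!inE] /AB Bi|_]; first by rewrite ifT // inE.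
by case: ifPn.
Qed.

Lemma esum_union_nat (T : choiceType) (B : nat -> set T) (a : T -> \bar R)
  (lo hi : nat) :
  (forall i j, (lo <= i < hi)%N -> (lo <= j < hi)%N -> i <> j ->
     B i `&` B j = set0) ->
  (forall x, 0 <= a x) ->
  \esum_(x in [set x | exists2 k, (lo <= k < hi)%N & B k x]) a x =
  \sum_(lo <= k < hi) \esum_(x in B k) a x.
Proof.
move=> dis a0; elim: hi dis => [|hi IH] dis.
  rewrite big_geq // (_ : [set x | _] = set0) ?esum_set0 //.
  by apply/seteqP; split => x //= [k]; rewrite ltn0 andbF.
have [lohi|hilo] := leqP lo hi; last first.
  rewrite big_geq // (_ : [set x | _] = set0) ?esum_set0 //.
  apply/seteqP; split => x //= [k /andP[h1 h2]].
  by lia.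
rewrite big_nat_recr //= -IH; last first.
  by move=> i j hi1 hj1; apply: dis; lia.
rewrite (esumID (B hi)) // addeC; congr (_ + _).
  congr esum; apply/seteqP; split => x /=.
    move=> [[k /andP[k1 k2] Bk] nB]; exists k => //; rewrite k1 /=.
    rewrite ltn_neqAle -ltnS k2 andbT; apply/eqP => kh; apply: nB; by rewrite -kh.
  move=> [k /andP[k1 k2] Bk]; split; first by exists k => //; lia.
  move=> Bh.
  have : (B k `&` B hi) x by [].
  by rewrite dis //; lia.
congr esum; apply/seteqP; split => x /=; first by case.
by move=> Bx; split => //; exists hi => //; lia.
Qed.

Lemma sum_fin_term (X : nat -> \bar R) N m : (forall i, 0 <= X i) ->
  \sum_(0 <= i < N) X i < +oo -> (m < N)%N -> X m \is a fin_num.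
Proof.
move=> X0 hs mN; rewrite ge0_fin_numE //; apply: le_lt_trans hs.
rewrite (@big_cat_nat _ _ _ m 0 N _ _ (leq0n m) (ltnW mN)) /=.
rewrite (@big_ltn _ _ _ m N) //.
rewrite addeCA; apply: leeDl; rewrite adde_ge0 //; exact: sume_ge0.
Qed.

End EsumLemmas.

Lemma powR_invK (R : realType) (x r : R) : 0 <= x -> (x^-1) `^ r = (x `^ r)^-1.
Proof.
rewrite le_eqVlt => /predU1P[<-|xp].
  by rewrite invr0 /powR eqxx; case: (r == 0); rewrite ?invr1 ?invr0.
have := @powRM R (x^-1) x r; rewrite invr_ge0 (ltW xp) mulVf ?gt_eqF // powR1.
move=> /(_ isT isT) H.
have xr : x `^ r != 0 by rewrite gt_eqF // powR_gt0.
by apply: (mulIf xr); rewrite -H mulVf.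
Qed.

Lemma exch_sum (R : realType) (F : nat -> nat -> R) N :
  \sum_(0 <= m < N) \sum_(1 <= k < m.+1) F m k =
  \sum_(1 <= k < N) \sum_(k <= m < N) F m k.
Proof.
elim: N => [|N IH]; first by rewrite !big_geq.
rewrite big_nat_recr //= IH.
rewrite [in RHS](eq_big_nat _ _ (F2 := fun k => \sum_(k <= m < N) F m k + F N k)); last first.
  by move=> k /andP[_ kN]; rewrite big_nat_recr.
rewrite big_split /=; congr (_ + _).
case: N {IH} => [|N]; first by rewrite !big_geq.
by rewrite [in RHS]big_nat_recr //= [X in _ = _ + X]big_geq // addr0.
Qed.

Section Core.
Variables (R : realType) (n : nat) (D K a g : nat -> R) (p : R).
Hypotheses (p1 : 1 <= p) (D0 : forall i, 0 <= D i) (K0 : forall i, 0 <= K i)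
  (Kpos : forall m, (m < n)%N -> 0 < K m) (a0 : forall m, 0 <= a m)
  (g0 : forall m, 0 <= g m)
  (hlev : forall m, (m < n)%N ->
     (K m * a m.+1) `^ p^-1 <= (D m * a m) `^ p^-1 + g m `^ p^-1).

Let P k m := \prod_(k <= i < m) (D i / K i).

Let P_ge0 k m : 0 <= P k m.
Proof. by rewrite /P prodr_ge0 // => i _; rewrite divr_ge0. Qed.

Let p0 : 0 < p. Proof. by rewrite (lt_le_trans ltr01). Qed.

Let lev m : (m < n)%N -> a m.+1 `^ p^-1 <=
  (D m / K m) `^ p^-1 * a m `^ p^-1 + ((K m) `^ p^-1)^-1 * g m `^ p^-1.
Proof.
move=> hm; have Kp := Kpos m hm.
have kp : 0 < K m `^ p^-1 by rewrite powR_gt0.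
have := hlev m hm; rewrite !powRM //.
rewrite (@powR_invK R (K m) p^-1); last exact: K0.
move=> H.
rewrite (_ : D m `^ p^-1 * (K m `^ p^-1)^-1 * a m `^ p^-1 +
  (K m `^ p^-1)^-1 * g m `^ p^-1 =
  (K m `^ p^-1)^-1 * (D m `^ p^-1 * a m `^ p^-1 + g m `^ p^-1)); last by ring.
rewrite -(ler_pM2l kp) mulrA mulfV ?gt_eqF // mul1r //.
all: by rewrite invr_ge0.
Qed.

Let Pstep k m r : (k <= m)%N -> P k m.+1 `^ r = P k m `^ r * (D m / K m) `^ r.
Proof.
move=> km; rewrite /P big_nat_recr //= powRM //.
  by rewrite prodr_ge0 // => i _; rewrite divr_ge0.
by rewrite divr_ge0.
Qed.

Lemma rec_bound m : (m <= n)%N -> a m `^ p^-1 <=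
  P 0 m `^ p^-1 * a 0 `^ p^-1 +
  \sum_(1 <= k < m.+1) ((K k.-1) `^ p^-1)^-1 * P k m `^ p^-1 * g k.-1 `^ p^-1.
Proof.
elim: m => [_|m IH hm].
  by rewrite /P big_geq // powR1 mul1r big_geq // addr0.
have hmn : (m < n)%N by [].
have IH' := IH (ltnW hm).
apply: le_trans (lev m hmn) _.
apply: le_trans (lerD (ler_wpM2l (powR_ge0 _ _) IH') (le_refl _)) _.
rewrite le_eqVlt; apply/orP; left; apply/eqP.
rewrite [in RHS]big_nat_recr //= mulrDr big_distrr /= addrA.
congr (_ + _ + _).
- by rewrite (Pstep 0 m p^-1) // mulrCA mulrA.
- apply: eq_big_nat => k /andP[k1 k2].
  rewrite (Pstep k m p^-1); last by lia.
  by ring.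
- by rewrite /P big_geq // powR1 mulr1.
Qed.

Let gsum_le m : (m <= n)%N ->
  \sum_(1 <= k < m.+1) g k.-1 <= \sum_(0 <= k < n) g k.
Proof.
move=> mn; rewrite big_add1 /= (@big_cat_nat _ _ _ m 0 n _ _ (leq0n m) mn) /= lerDl.
by rewrite sumr_ge0.
Qed.

Lemma final_p q : 1 < p -> 1 < q -> p^-1 + q^-1 = 1 ->
  (\sum_(0 <= m < n.+1) a m) `^ p^-1 <=
  (\sum_(0 <= m < n.+1) P 0 m) `^ p^-1 * a 0 `^ p^-1 +
  (\sum_(1 <= m < n.+1)
     (\sum_(1 <= k < m.+1) (K k.-1 `^ (q / p))^-1 * P k m `^ (q / p)) `^ (p / q))
    `^ p^-1 * (\sum_(0 <= k < n) g k) `^ p^-1.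
Proof.
move=> p1s q1 pq.
have q0 : 0 < q by rewrite (lt_trans ltr01).
have pi0 : 0 <= p^-1 by rewrite invr_ge0 ltW.
set y := fun m => P 0 m `^ p^-1 * a 0 `^ p^-1.
set z := fun m => \sum_(1 <= k < m.+1)
   ((K k.-1) `^ p^-1)^-1 * P k m `^ p^-1 * g k.-1 `^ p^-1.
have y0 m : 0 <= y m by rewrite /y mulr_ge0 ?powR_ge0.
have z0 m : 0 <= z m.
  by rewrite /z sumr_ge0 // => k _; rewrite !mulr_ge0 ?invr_ge0 ?powR_ge0.
set G := \sum_(0 <= k < n) g k.
have G0 : 0 <= G by rewrite sumr_ge0.
have S1 : \sum_(0 <= m < n.+1) a m <= \sum_(0 <= m < n.+1) (y m + z m) `^ p.
  apply: ler_sum_nat => m /andP[_ hm].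
  rewrite -{1}(@powRKV R p (a m) p0 (a0 m)).
  apply: (@ge0_ler_powR R p); rewrite ?nnegrE ?powR_ge0 ?addr_ge0 ?(ltW p0) //.
  exact: rec_bound.
have S2 : (\sum_(0 <= m < n.+1) a m) `^ p^-1 <=
    (\sum_(0 <= m < n.+1) (y m + z m) `^ p) `^ p^-1.
  apply: (@ge0_ler_powR R p^-1 pi0); last exact: S1.
    by rewrite nnegrE sumr_ge0.
  by rewrite nnegrE sumr_ge0 // => m _; rewrite powR_ge0.
apply: le_trans S2 _.
apply: le_trans (@minkF R _ (index_iota 0 n.+1) p y z p1 y0 z0) _.
apply: lerD.
  rewrite (eq_bigr (fun m => P 0 m * a 0)); last first.
    by move=> m _; rewrite /y powRM ?powR_ge0 // !powRKV.
  rewrite -big_distrl /= powRM //; by rewrite sumr_ge0.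
have z00 : z 0%N = 0 by rewrite /z big_geq.
rewrite big_ltn // z00 powR0 ?gt_eqF // add0r.
set C := fun m => \sum_(1 <= k < m.+1) (K k.-1 `^ (q / p))^-1 * P k m `^ (q / p).
have C0 m : 0 <= C m.
  by rewrite /C sumr_ge0 // => k _; rewrite mulr_ge0 ?invr_ge0 ?powR_ge0.
have hz m : (m <= n)%N -> z m `^ p <= C m `^ (p / q) * G.
  move=> mn; have qp : q^-1 + p^-1 = 1 by rewrite addrC.
  have cge0 : forall k, 0 <= (K k.-1 `^ p^-1)^-1 * P k m `^ p^-1.
    by move=> k; rewrite mulr_ge0 ?invr_ge0 ?powR_ge0.
  have tge0 : forall k, 0 <= g k.-1 `^ p^-1 by move=> k; rewrite powR_ge0.
  have Hh := @hoelderF R nat (index_iota 1 m.+1) q p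
    (fun k => (K k.-1 `^ p^-1)^-1 * P k m `^ p^-1) (fun k => g k.-1 `^ p^-1)
    q0 p0 qp cge0 tge0.
  have EC : \sum_(k <- index_iota 1 m.+1)
      ((K k.-1 `^ p^-1)^-1 * P k m `^ p^-1) `^ q = C m.
    apply: eq_bigr => k _.
    rewrite powRM ?invr_ge0 ?powR_ge0 // (@powR_invK R (K k.-1 `^ p^-1) q (powR_ge0 _ _)).
    by rewrite -!powRrM (mulrC p^-1 q).
  have ET : \sum_(k <- index_iota 1 m.+1) (g k.-1 `^ p^-1) `^ p =
      \sum_(1 <= k < m.+1) g k.-1.
    by apply: eq_bigr => k _; rewrite (@powRKV R p (g k.-1) p0 (g0 _)).
  rewrite EC ET in Hh.
  have Hz : z m <= C m `^ q^-1 * G `^ p^-1.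
    apply: (le_trans Hh); apply: ler_wpM2l; first exact: powR_ge0.
    apply: (@ge0_ler_powR R p^-1 pi0); rewrite ?nnegrE ?sumr_ge0 //.
    exact: gsum_le.
  have := @ge0_ler_powR R p (ltW p0) (z m) (C m `^ q^-1 * G `^ p^-1).
  rewrite !nnegrE z0 mulr_ge0 ?powR_ge0 // => /(_ isT isT Hz) Hz2.
  apply: (le_trans Hz2).
  rewrite powRM ?powR_ge0 // (@powRKV R p G p0 G0) -powRrM (mulrC q^-1 p).
  by [].
have Hs : \sum_(1 <= i < n.+1) z i `^ p <=
    (\sum_(1 <= m < n.+1) C m `^ (p / q)) * G.
  rewrite big_distrl /=; apply: ler_sum_nat => m /andP[_ hm]; exact: hz.
apply: (@le_trans _ _ (((\sum_(1 <= m < n.+1) C m `^ (p / q)) * G) `^ p^-1)).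
  apply: (@ge0_ler_powR R p^-1 pi0) => //; rewrite nnegrE ?sumr_ge0 //.
    by move=> i _; rewrite powR_ge0.
  by rewrite mulr_ge0 // sumr_ge0 // => i _; rewrite powR_ge0.
rewrite powRM //; last by rewrite sumr_ge0 // => i _; rewrite powR_ge0.
Qed.

Lemma final_1 : p = 1 ->
  \sum_(0 <= m < n.+1) a m <=
  (\sum_(0 <= m < n.+1) P 0 m) * a 0 +
  (\big[Num.max/0]_(1 <= k < n.+1)
     ((K k.-1)^-1 * \sum_(k <= m < n.+1) P k m)) * \sum_(0 <= k < n) g k.
Proof.
move=> pe.
have rb m : (m <= n)%N -> a m <= P 0 m * a 0 +
    \sum_(1 <= k < m.+1) (K k.-1)^-1 * P k m * g k.-1.
  move=> mn; have := rec_bound m mn; rewrite pe invr1.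
  rewrite (powRr1 (a0 m)) (powRr1 (P_ge0 0 m)) (powRr1 (a0 0)).
  move=> H; apply: (le_trans H); rewrite lerD2l le_eqVlt; apply/orP; left.
  apply/eqP; apply: eq_bigr => k _.
  by rewrite (powRr1 (K0 _)) (powRr1 (P_ge0 _ _)) (powRr1 (g0 _)).
apply: (@le_trans _ _ (\sum_(0 <= m < n.+1) (P 0 m * a 0 +
    \sum_(1 <= k < m.+1) (K k.-1)^-1 * P k m * g k.-1))).
  by apply: ler_sum_nat => m /andP[_ hm]; apply: rb.
rewrite big_split /= -big_distrl /= lerD2l exch_sum.
set M := \big[Num.max/0]_(1 <= k < n.+1) ((K k.-1)^-1 * \sum_(k <= m < n.+1) P k m).
rewrite big_add1 /= big_distrr /=.
apply: ler_sum_nat => k /andP[_ kn].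
rewrite -big_distrl /= ler_wpM2r // -big_distrr /=.
have := @le_bigmax_seq _ R nat (index_iota 1 n.+1) 0 k.+1 xpredT
  (fun k => (K k.-1)^-1 * \sum_(k <= m < n.+1) P k m).
rewrite mem_index_iota /= => /(_ _ isT); apply; lia.
Qed.

End Core.

Section Graph.
Variables (R : realType) (V : countType) (w : V -> V -> R) (nu : V -> R)
  (n : nat) (S : nat -> set V).
Hypotheses (wsym : forall u v, w u v = w v u) (w0 : forall u v, 0 <= w u v)
  (nu0 : forall v, 0 < nu v)
  (disj : forall i j, (i <= n)%N -> (j <= n)%N -> i <> j -> S i `&` S j = set0)
  (cover : forall v, exists2 m, (m <= n)%N & S m v)
  (Dfin : forall m, (m < n)%N -> Dm w nu S m \is a fin_num)
  (Kfin : forall m, (m < n)%N -> Km w nu S m \is a fin_num)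
  (Kpos : forall m, (m < n)%N -> (0 < Km w nu S m)%E).

Let D m := fine (Dm w nu S m).
Let K m := fine (Km w nu S m).

Lemma cmod_ge0 (z : R[i]) : 0 <= cmod z.
Proof. by case: z => a b; rewrite /cmod /= sqrtr_ge0. Qed.

Lemma cmod_sym (x y : R[i]) : cmod (x - y) = cmod (y - x).
Proof. by rewrite /cmod -opprB normcN. Qed.

Lemma cmod_tri (x y : R[i]) : cmod y <= cmod x + cmod (x - y).
Proof.
have E : x + (y - x) = y by rewrite addrC subrK.
rewrite -{1}E (cmod_sym x y); exact: le_normcD.
Qed.

Lemma wA_ge0 A v : (0 <= wA w A v)%E.
Proof. by apply: esum_ge0 => u _; rewrite lee_fin. Qed.

Lemma D_ge0 m : 0 <= D m.
Proof.
rewrite /D /Dm; have [[v Sv]|NS] := pselect (exists v, S m v).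
  apply: fine_ge0; apply: (@le_trans _ _ (wA w (S m.+1) v * (nu v)^-1%:E)%E).
    by rewrite mule_ge0 ?wA_ge0 // lee_fin invr_ge0 ltW.
  by apply: ereal_sup_ubound; exists v.
rewrite (_ : [set _ | v in S m] = set0) ?ereal_sup0 //.
apply/seteqP; split => // x [v Sv _]; by apply: NS; exists v.
Qed.

Lemma K_ge0 m : 0 <= K m.
Proof.
rewrite /K /Km; apply: fine_ge0; apply: le_ereal_inf_tmp => _ [v Sv <-].
by rewrite mule_ge0 ?wA_ge0 // lee_fin invr_ge0 ltW.
Qed.

Lemma K_gt0 m : (m < n)%N -> 0 < K m.
Proof. by move=> mn; rewrite /K fine_gt0 // Kpos //= ltey_eq Kfin. Qed.

Lemma wA_le_D m u : (m < n)%N -> S m u -> (wA w (S m.+1) u <= (D m * nu u)%:E)%E.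
Proof.
move=> mn Su.
have H : (wA w (S m.+1) u * (nu u)^-1%:E <= Dm w nu S m)%E.
  by apply: ereal_sup_ubound; exists u.
rewrite EFinM /D fineK ?Dfin //.
have nup := nu0 u.
have := lee_wpmul2r (x := (nu u)%:E) _ H; rewrite lee_fin (ltW nup) => /(_ isT).
by rewrite -muleA -EFinM mulVf ?gt_eqF // mule1.
Qed.

Lemma K_le_wA m v : (m < n)%N -> S m.+1 v -> ((K m * nu v)%:E <= wA w (S m) v)%E.
Proof.
move=> mn Sv.
have H : (Km w nu S m <= wA w (S m) v * (nu v)^-1%:E)%E.
  by apply: ereal_inf_lbound; exists v.
rewrite EFinM /K fineK ?Kfin //.
have nup := nu0 v.
have := lee_wpmul2r (x := (nu v)%:E) _ H; rewrite lee_fin (ltW nup) => /(_ isT).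
by rewrite -muleA -EFinM mulVf ?gt_eqF // mule1.
Qed.

Let Gm p (f : V -> R[i]) m := \esum_(v in S m.+1) \esum_(u in S m)
  ((cmod (f u - f v)) `^ p * w u v)%:E.
Let Gt p (f : V -> R[i]) := \esum_(uv in [set: V * V])
  ((cmod (f uv.1 - f uv.2)) `^ p * w uv.1 uv.2)%:E.

Lemma level p f m l : 1 <= p -> (m < n)%N -> 0 < l < 1 ->
  ((K m)%:E * psum p nu (S m.+1) f <=
   (cc p l * D m)%:E * psum p nu (S m) f + (cc p (1 - l))%:E * Gm p f m)%E.
Proof.
move=> p1 mn hl.
have l01 : 0 <= l /\ 0 <= 1 - l.
  by case/andP: hl => l0 l1; rewrite ltW // subr_ge0 ltW.
rewrite /psum -esumZ; last 2 first.
- exact: K_ge0.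
- by move=> v; rewrite lee_fin mulr_ge0 ?powR_ge0 ?ltW.
apply: (@le_trans _ _ (\esum_(v in S m.+1) \esum_(u in S m)
   ((cmod (f v) `^ p * w u v)%:E))%E).
  apply: le_esum => v Sv.
  rewrite (eq_esum (fun u _ => EFinM (cmod (f v) `^ p) (w u v))) esumZ; last 2 first.
  - exact: powR_ge0.
  - by move=> u; rewrite lee_fin.
  rewrite -EFinM mulrCA EFinM; apply: lee_wpmul2l; first by rewrite lee_fin powR_ge0.
  exact: K_le_wA.
apply: (@le_trans _ _ (\esum_(v in S m.+1) \esum_(u in S m)
   ((cc p l)%:E * ((cmod (f u) `^ p * w u v)%:E) +
    (cc p (1 - l))%:E * ((cmod (f u - f v) `^ p * w u v)%:E)))%E).
  apply: le_esum => v Sv; apply: le_esum => u Su.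
  rewrite -!EFinM -EFinD lee_fin !mulrA -mulrDl ler_wpM2r //.
  apply: le_trans (@conv_pt R p l _ _ p1 hl (cmod_ge0 _) (cmod_ge0 _)).
  apply: (@ge0_ler_powR R p); rewrite ?nnegrE ?addr_ge0 ?cmod_ge0 //.
    by rewrite (le_trans ler01).
  exact: cmod_tri.
have ccl0 := @cc_ge0 R p _ (proj1 l01).
have ccl1 := @cc_ge0 R p _ (proj2 l01).
have e1 v : (0 <= (cmod (f v) `^ p * w v v)%:E)%E.
  by rewrite lee_fin mulr_ge0 ?powR_ge0.
rewrite (eq_esum (b := fun v => (cc p l)%:E * (\esum_(u in S m) (cmod (f u) `^ p * w u v)%:E)
   + (cc p (1 - l))%:E * (\esum_(u in S m) (cmod (f u - f v) `^ p * w u v)%:E))%E); last first.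
  move=> v _; rewrite esumD; last 2 first.
  - by move=> u _; rewrite mule_ge0 // lee_fin mulr_ge0 ?powR_ge0.
  - by move=> u _; rewrite mule_ge0 // lee_fin mulr_ge0 ?powR_ge0.
  rewrite !esumZ //.
  - by move=> u; rewrite lee_fin mulr_ge0 ?powR_ge0.
  - by move=> u; rewrite lee_fin mulr_ge0 ?powR_ge0.
rewrite esumD; last 2 first.
- move=> v _; rewrite mule_ge0 // ?lee_fin //; apply: esum_ge0 => u _.
  by rewrite lee_fin mulr_ge0 ?powR_ge0.
- move=> v _; rewrite mule_ge0 // ?lee_fin //; apply: esum_ge0 => u _.
  by rewrite lee_fin mulr_ge0 ?powR_ge0.
rewrite !esumZ //; last 2 first.
- by move=> v; apply: esum_ge0 => u _; rewrite lee_fin mulr_ge0 ?powR_ge0.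
- by move=> v; apply: esum_ge0 => u _; rewrite lee_fin mulr_ge0 ?powR_ge0.
apply: leeD => //.
rewrite (EFinM (cc p l) (D m)) -muleA; apply: lee_wpmul2l; first by rewrite lee_fin.
rewrite esum_swap; last by move=> v u; rewrite lee_fin mulr_ge0 ?powR_ge0.
rewrite -esumZ; last 2 first.
- exact: D_ge0.
- by move=> v; rewrite lee_fin mulr_ge0 ?powR_ge0 ?ltW.
apply: le_esum => u Su.
rewrite (eq_esum (fun v _ => EFinM (cmod (f u) `^ p) (w u v))) esumZ; last 2 first.
- exact: powR_ge0.
- by move=> v; rewrite lee_fin.
rewrite (eq_esum (fun v _ => congr1 EFin (wsym u v))).
rewrite -(EFinM (D m)) mulrCA (EFinM (cmod (f u) `^ p)).
apply: lee_wpmul2l; first by rewrite lee_fin powR_ge0.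
exact: wA_le_D.
Qed.

Lemma psum_split p f :
  psum p nu setT f = \sum_(0 <= m < n.+1) psum p nu (S m) f.
Proof.
rewrite /psum -esum_union_nat; last 2 first.
- by move=> i j /andP[_ hi] /andP[_ hj] ij; apply: disj.
- by move=> v; rewrite lee_fin mulr_ge0 ?powR_ge0 ?ltW.
congr esum; apply/seteqP; split => v // _.
by have [m mn Sm] := cover v; exists m.
Qed.

Lemma Gsum_le p f : (\sum_(0 <= m < n) Gm p f m <= Gt p f)%E.
Proof.
have E m : Gm p f m = \esum_(k in S m.+1 `*`` (fun _ => S m))
    ((cmod (f k.1 - f k.2)) `^ p * w k.1 k.2)%:E.
  rewrite /Gm esum_esum; last by move=> *; rewrite lee_fin mulr_ge0 ?powR_ge0.
  by apply: eq_esum => k _; rewrite cmod_sym wsym.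
rewrite (eq_bigr _ (fun m _ => E m)) -esum_union_nat; last 2 first.
- move=> i j /andP[_ hi] /andP[_ hj] ij; apply/seteqP; split => // k [[Si _] [Sj _]].
  have : (S i.+1 `&` S j.+1) k.1 by [].
  by rewrite disj //; move=> /eqP; rewrite eqSS => /eqP.
- by move=> k; rewrite lee_fin mulr_ge0 ?powR_ge0.
by apply: esum_mono_set => // k; rewrite lee_fin mulr_ge0 ?powR_ge0.
Qed.

Lemma prep p f : 1 <= p -> (psum p nu setT f < +oo)%E ->
  (forall m, (m < n)%N -> Gm p f m \is a fin_num) ->
  [/\ forall m, 0 <= fine (psum p nu (S m) f),
      forall m, 0 <= fine (Gm p f m),
      psum p nu setT f = (\sum_(0 <= m < n.+1) fine (psum p nu (S m) f))%:E,
      psum p nu (S 0) f = (fine (psum p nu (S 0) f))%:E &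
      ((\sum_(0 <= m < n) fine (Gm p f m))%:E <= Gt p f)%E] /\
      (forall m, (m < n)%N ->
        (K m * fine (psum p nu (S m.+1) f)) `^ p^-1 <=
        (D m * fine (psum p nu (S m) f)) `^ p^-1 + fine (Gm p f m) `^ p^-1).
Proof.
move=> p1 hf Gf.
have Ag m : (0 <= psum p nu (S m) f)%E.
  by apply: esum_ge0 => v _; rewrite lee_fin mulr_ge0 ?powR_ge0 ?ltW.
have Gg m : (0 <= Gm p f m)%E.
  by apply: esum_ge0 => v _; apply: esum_ge0 => u _; rewrite lee_fin mulr_ge0 ?powR_ge0.
have Afin m : (m <= n)%N -> psum p nu (S m) f \is a fin_num.
  move=> mn; rewrite psum_split in hf.
  by apply: (@sum_fin_term R (fun m => psum p nu (S m) f) n.+1 m _ hf).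
have AE m : (m <= n)%N -> psum p nu (S m) f = (fine (psum p nu (S m) f))%:E.
  by move=> mn; rewrite fineK // Afin.
split; first split.
- by move=> m; apply: fine_ge0.
- by move=> m; apply: fine_ge0.
- rewrite psum_split -sumEFin; apply: eq_big_nat => m /andP[_ hm]; exact: AE.
- exact: AE.
- rewrite -sumEFin (eq_big_nat _ _ (F2 := fun m => Gm p f m)); first exact: Gsum_le.
  by move=> m /andP[_ hm]; rewrite fineK // Gf.
move=> m mn; apply: mink => //.
- by rewrite mulr_ge0 ?K_ge0 ?fine_ge0.
- by rewrite mulr_ge0 ?D_ge0 ?fine_ge0.
- by rewrite fine_ge0.
move=> l hl; have := @level p f m l p1 mn hl.
rewrite (AE m.+1 mn) (AE m (ltnW mn)) -[X in (_ <= _ + _ * X)%E](fineK (Gf m mn)).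
by rewrite -!EFinM -EFinD lee_fin mulrA.
Qed.

Lemma Gfin_of p f : (~ ((0 < n)%N /\ Gt p f = +oo%E)) ->
  forall m, (m < n)%N -> Gm p f m \is a fin_num.
Proof.
move=> NG m mn.
have Gg k : (0 <= Gm p f k)%E.
  by apply: esum_ge0 => v _; apply: esum_ge0 => u _; rewrite lee_fin mulr_ge0 ?powR_ge0.
have Gt_lt : (Gt p f < +oo)%E.
  rewrite lt_neqAle leey andbT; apply/eqP => Ginf; apply: NG; split => //.
  exact: (leq_ltn_trans (leq0n m) mn).
apply: (@sum_fin_term R (fun k => Gm p f k) n m Gg _ mn).
exact: le_lt_trans (Gsum_le p f) Gt_lt.
Qed.

Lemma thm_p p q : 1 < p -> 1 < q -> p^-1 + q^-1 = 1 ->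
  forall f : V -> R[i], (psum p nu setT f < +oo)%E ->
  (pnorm p nu setT f <=
    ((\sum_(0 <= m < n.+1) \prod_(0 <= j < m) (D j / K j)) `^ p^-1)%:E
      * pnorm p nu (S 0%N) f
    + ((\sum_(1 <= m < n.+1)
          (\sum_(1 <= k < m.+1)
             (K k.-1 `^ (q / p))^-1
             * (\prod_(k <= i < m) (D i / K i)) `^ (q / p)) `^ (p / q))
        `^ p^-1)%:E
      * gradnorm p w f)%E.
Proof.
move=> p1s q1 pq f hf.
have p1 := ltW p1s.
have p0 : 0 < p by rewrite (lt_trans ltr01).
have q0 : 0 < q by rewrite (lt_trans ltr01).
have pi0 : p^-1 != 0 by rewrite invr_eq0 gt_eqF.
set c1 := (\sum_(0 <= m < n.+1) \prod_(0 <= j < m) (D j / K j)) `^ p^-1.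
set C := fun m => \sum_(1 <= k < m.+1)
             (K k.-1 `^ (q / p))^-1 * (\prod_(k <= i < m) (D i / K i)) `^ (q / p).
set c2 := (\sum_(1 <= m < n.+1) C m `^ (p / q)) `^ p^-1.
have c10 : 0 <= c1 by apply: powR_ge0.
have c20 : 0 <= c2 by apply: powR_ge0.
have gradE : gradnorm p w f = poweR (Gt p f) p^-1 by [].
have pn0 : (0 <= pnorm p nu (S 0) f)%E by apply: poweR_ge0.
have [[n0 Ginf]|NG] := pselect ((0 < n)%N /\ Gt p f = +oo%E).
  have c2p : 0 < c2.
    apply: powR_gt0; rewrite big_ltn //.
    apply: (@lt_le_trans _ _ (C 1%N `^ (p / q))); last first.
      by rewrite lerDl sumr_ge0 // => m _; rewrite powR_ge0.
    apply: powR_gt0; rewrite /C big_nat1 big_geq // powR1 mulr1.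
    by rewrite invr_gt0 powR_gt0 // K_gt0.
  rewrite gradE Ginf poweRyr // gt0_muley ?lte_fin // addey ?leey //.
  by rewrite gt_eqF // (lt_le_trans _ (mule_ge0 _ pn0)) ?ltNy0 ?lee_fin.
have Gf := @Gfin_of p f NG.
have [[a0 g0 Ae A0e Gle] hlev] := @prep p f p1 hf Gf.
have H := @final_p R n D K (fun m => fine (psum p nu (S m) f))
  (fun m => fine (Gm p f m)) p p1 D_ge0 K_ge0 K_gt0 a0 g0 hlev q p1s q1 pq.
rewrite /pnorm Ae A0e !poweR_EFin.
apply: (@le_trans _ _ ((c1 * fine (psum p nu (S 0) f) `^ p^-1)%:E +
   c2%:E * ((\sum_(0 <= m < n) fine (Gm p f m)) `^ p^-1)%:E)%E).
  by rewrite -EFinM -EFinD lee_fin; exact: H.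
apply: leeD; first by rewrite EFinM.
apply: lee_wpmul2l; first by rewrite lee_fin.
rewrite gradE -poweR_EFin; apply: gt0_ler_poweR => //.
- by rewrite invr_ge0 ltW.
- by rewrite in_itv /= leey andbT lee_fin sumr_ge0.
- by rewrite in_itv /= leey andbT esum_ge0 // => uv _; rewrite lee_fin mulr_ge0 ?powR_ge0.
Qed.

Lemma thm_1 : forall f : V -> R[i], (psum 1%R nu setT f < +oo)%E ->
  (pnorm 1%R nu setT f <=
    (\sum_(0 <= m < n.+1) \prod_(0 <= j < m) (D j / K j))%:E * pnorm 1%R nu (S 0%N) f
    + (\big[Num.max/0]_(1 <= k < n.+1)
         ((K k.-1)^-1 * \sum_(k <= m < n.+1) \prod_(k <= i < m) (D i / K i)))%:E
      * gradnorm 1%R w f)%E.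
Proof.
move=> f hf.
have p1 : (1 : R) <= 1 by [].
set c1 := \sum_(0 <= m < n.+1) \prod_(0 <= j < m) (D j / K j).
set M := \big[Num.max/0]_(1 <= k < n.+1)
         ((K k.-1)^-1 * \sum_(k <= m < n.+1) \prod_(k <= i < m) (D i / K i)).
have c10 : 0 <= c1.
  rewrite sumr_ge0 // => m _; rewrite prodr_ge0 // => i _.
  by rewrite divr_ge0 ?D_ge0 ?K_ge0.
have M0 : 0 <= M.
  rewrite /M; elim/big_ind: _ => //.
    by move=> x y x0 y0; rewrite le_max x0.
  move=> k _; rewrite mulr_ge0 ?invr_ge0 ?K_ge0 // sumr_ge0 // => m _.
  by rewrite prodr_ge0 // => i _; rewrite divr_ge0 ?D_ge0 ?K_ge0.
have gradE : gradnorm 1 w f = Gt 1 f.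
  by rewrite /gradnorm invr1 poweRe1 //; apply: esum_ge0 => uv _;
    rewrite lee_fin mulr_ge0 ?powR_ge0.
have pn0 : (0 <= pnorm 1 nu (S 0) f)%E by apply: poweR_ge0.
have [[n0 Ginf]|NG] := pselect ((0 < n)%N /\ Gt 1 f = +oo%E).
  have Mp : 0 < M.
    have := @le_bigmax_seq _ R nat (index_iota 1 n.+1) 0 1%N xpredT
      (fun k => (K k.-1)^-1 * \sum_(k <= m < n.+1) \prod_(k <= i < m) (D i / K i)).
    rewrite mem_index_iota /= ltnS n0 => /(_ isT isT) HM.
    apply: lt_le_trans HM; rewrite mulr_gt0 // ?invr_gt0 ?K_gt0 //.
    rewrite big_ltn // big_geq // (@lt_le_trans _ _ 1) //.
    by rewrite lerDl sumr_ge0 // => m _; rewrite prodr_ge0 // => i _;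
      rewrite divr_ge0 ?D_ge0 ?K_ge0.
  rewrite gradE Ginf gt0_muley ?lte_fin // addey ?leey //.
  by rewrite gt_eqF // (lt_le_trans _ (mule_ge0 _ pn0)) ?ltNy0 ?lee_fin.
have Gf := @Gfin_of 1 f NG.
have [[a0 g0 Ae A0e Gle] hlev] := @prep 1 f p1 hf Gf.
have H := @final_1 R n D K (fun m => fine (psum 1 nu (S m) f))
  (fun m => fine (Gm 1 f m)) 1 p1 D_ge0 K_ge0 K_gt0 a0 g0 hlev (erefl 1).
rewrite /pnorm invr1 Ae A0e !poweRe1 ?lee_fin ?sumr_ge0 //.
apply: (@le_trans _ _ ((c1 * fine (psum 1 nu (S 0) f))%:E +
   M%:E * (\sum_(0 <= m < n) fine (Gm 1 f m))%:E)%E).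
  by rewrite -EFinM -EFinD lee_fin; exact: H.
apply: leeD; first by rewrite EFinM.
apply: lee_wpmul2l; first by rewrite lee_fin.
by rewrite gradE.
Qed.

End Graph.

Theorem theorem1p1 (R : realType) (V : countType)
  (w : V -> V -> R) (nu : V -> R) (n : nat) (S : nat -> set V) :
  (forall u v, w u v = w v u) ->
  (forall u v, 0 <= w u v) ->
  (forall u, w u u = 0) ->
  (forall v, 0 < nu v) ->
  (* S_0, ..., S_n is a partition of V into disjoint sets *)
  (forall i j, (i <= n)%N -> (j <= n)%N -> i <> j -> S i `&` S j = set0) ->
  (forall v, exists2 m, (m <= n)%N & S m v) ->
  (* D_m and K_m are finite real numbers (implicit in the paper), K_m > 0 *)
  (forall m, (m < n)%N -> Dm w nu S m \is a fin_num) ->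
  (forall m, (m < n)%N -> Km w nu S m \is a fin_num) ->
  (forall m, (m < n)%N -> (0 < Km w nu S m)%E) ->
  let D m := fine (Dm w nu S m) in
  let K m := fine (Km w nu S m) in
  let f0norm p f := pnorm p nu (S 0%N) f in
  (forall p q : R, 1 < p -> 1 < q -> p^-1 + q^-1 = 1 ->
   forall f : V -> R[i], (psum p nu setT f < +oo)%E ->
   (pnorm p nu setT f <=
      ((\sum_(0 <= m < n.+1) \prod_(0 <= j < m) (D j / K j)) `^ p^-1)%:E
        * f0norm p f
      + ((\sum_(1 <= m < n.+1)
            (\sum_(1 <= k < m.+1)
               (K k.-1 `^ (q / p))^-1
               * (\prod_(k <= i < m) (D i / K i)) `^ (q / p)) `^ (p / q))
          `^ p^-1)%:E
        * gradnorm p w f)%E)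
  /\
  (forall f : V -> R[i], (psum 1%R nu setT f < +oo)%E ->
   (pnorm 1%R nu setT f <=
      (\sum_(0 <= m < n.+1) \prod_(0 <= j < m) (D j / K j))%:E * f0norm 1%R f
      + (\big[Num.max/0]_(1 <= k < n.+1)
           ((K k.-1)^-1 * \sum_(k <= m < n.+1) \prod_(k <= i < m) (D i / K i)))%:E
        * gradnorm 1%R w f)%E).
Proof.
move=> wsym w0 ww nu0 disj cover Dfin Kfin Kpos D K f0norm.
split.
- move=> p q p1 q1 pq f hf; apply: thm_p => //.
- move=> f hf; apply: thm_1 => //.
Qed.
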